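(* With the definitions in the context: $\mathcal{P}^{TOBL}\subsetneq\mathcal{P}^{ATOBL}_{2\leftarrow3}$ and $\mathcal{P}^{TOBL}\subsetneq\mathcal{P}^{ATOBL}_{2\rightarrow3}$. More specifically, the correlation $P^G$ belongs to $\mathcal{P}^{ATOBL}_{2\leftarrow3}$ but not to $\mathcal{P}^{ATOBL}_{2\rightarrow3}$, and the correlation $\tilde P^G$ defined by $\tilde p^G(o_1o_2o_3|i_1i_2i_3)=p^G(o_1o_3o_2|i_1i_3i_2)$ (roles of parties 2 and 3 interchanged) belongs to $\mathcal{P}^{ATOBL}_{2\rightarrow3}$ but not to $\mathcal{P}^{ATOBL}_{2\leftarrow3}$.
   Context: Three parties; party $k\in\{1,2,3\}$ has input $i_k\in\{0,1\}$ and output $o_k\in\{0,1\}$; a tripartite correlation is a family of conditional distributions $p(o_1o_2o_3|i_1i_2i_3)$. A bipartite conditional distribution $q(o_2o_3|i_2i_3)$ is of type $2\leftarrow3$ if $\sum_{o_2}q(o_2o_3|i_2i_3)$ does not depend on $i_2$ (no signaling from 2 to 3), and of type $2\rightarrow3$ if $\sum_{o_3}q(o_2o_3|i_2i_3)$ does not depend on $i_3$ (no signaling from 3 to 2). $\mathcal{P}^{ATOBL}_{2\leftarrow3}$ (resp. $\mathcal{P}^{ATOBL}_{2\rightarrow3}$) is the set of tripartite correlations that can be written as $p(o_1o_2o_3|i_1i_2i_3)=\int p(\lambda)\,p(o_1|i_1,\lambda)\,q_\lambda(o_2o_3|i_2i_3)\,d\lambda$ for some probability distribution $p(\lambda)$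 over a hidden variable $\lambda$, single-party conditional distributions $p(o_1|i_1,\lambda)$, and bipartite conditional distributions $q_\lambda$ each of type $2\leftarrow3$ (resp. each of type $2\rightarrow3$). The set of time-ordered bilocal correlations is $\mathcal{P}^{TOBL}=\mathcal{P}^{ATOBL}_{2\leftarrow3}\cap\mathcal{P}^{ATOBL}_{2\rightarrow3}$. Let $a^{\pm}=\frac14(1\pm\frac1{\sqrt2})$ and let $P^G$ be the correlation with matrix (rows $(i_1i_2i_3)$, columns $(o_1o_2o_3)$, both in lexicographic order $000,\dots,111$) $$P^G=\frac12\begin{pmatrix} 2a^+&2a^-&0&0&0&0&2a^-&2a^+\\ 2a^+&2a^-&0&0&0&0&2a^-&2a^+\\ a^+&a^-&a^+&a^-&a^-&a^+&a^-&a^+\\ a^+&a^-&a^+&a^-&a^-&a^+&a^-&a^+\\ a^+&a^-&a^-&a^+&a^+&a^-&a^-&a^+\\ a^+&a^-&a^-&a^+&a^+&a^-&a^-&a^+\\ a^+&a^-&a^-&a^+&a^-&a^+&a^+&a^-\\ a^-&a^+&a^+&a^-&a^+&a^-&a^-&a^+ \end{pmatrix}.$$ *)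

(* Defs.v *)
From HB Require Import structures.
From mathcomp Require Import all_boot all_order all_algebra.
From mathcomp Require Import all_classical all_reals all_analysis.
Set Implicit Arguments. Unset Strict Implicit. Unset Printing Implicit Defensive.
Import Order.TTheory GRing.Theory Num.Theory.
Local Open Scope ring_scope.

Section Defs.
Variable R : realType.

(* A tripartite correlation: p o1 o2 o3 i1 i2 i3 = p(o1 o2 o3 | i1 i2 i3),
   bits encoded as bool (false = 0, true = 1). *)
Definition corr := bool -> bool -> bool -> bool -> bool -> bool -> R.

Definition cond1 (f : bool -> bool -> R) : Prop :=
  (forall o i, 0 <= f o i) /\ (forall i, f false i + f true i = 1).

Definition cond2 (q : bool -> bool -> bool -> bool -> R) : Prop :=
  (forall o2 o3 i2 i3, 0 <= q o2 o3 i2 i3) /\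
  (forall i2 i3, q false false i2 i3 + q false true i2 i3
                 + q true false i2 i3 + q true true i2 i3 = 1).

Definition type_2from3 (q : bool -> bool -> bool -> bool -> R) : Prop :=
  forall o3 i2 i2' i3,
    q false o3 i2 i3 + q true o3 i2 i3 = q false o3 i2' i3 + q true o3 i2' i3.

Definition type_2to3 (q : bool -> bool -> bool -> bool -> R) : Prop :=
  forall o2 i2 i3 i3',
    q o2 false i2 i3 + q o2 true i2 i3 = q o2 false i2 i3' + q o2 true i2 i3'.

Definition ATOBL (typ : (bool -> bool -> bool -> bool -> R) -> Prop) (p : corr)
  : Prop :=
  exists (d : measure_display) (T : measurableType d) (P : probability T R)
         (A : T -> bool -> bool -> R) (Q : T -> bool -> bool -> bool -> bool -> R),
    (forall l, cond1 (A l)) /\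
    (forall l, cond2 (Q l) /\ typ (Q l)) /\
    (forall o1 i1, measurable_fun setT (fun l => A l o1 i1)) /\
    (forall o2 o3 i2 i3, measurable_fun setT (fun l => Q l o2 o3 i2 i3)) /\
    (forall o1 o2 o3 i1 i2 i3,
        (p o1 o2 o3 i1 i2 i3)%:E =
        (\int[P]_l (A l o1 i1 * Q l o2 o3 i2 i3)%:E)%E).

Definition ATOBL_2from3 := ATOBL type_2from3.
Definition ATOBL_2to3 := ATOBL type_2to3.
Definition TOBL (p : corr) : Prop := ATOBL_2from3 p /\ ATOBL_2to3 p.

Definition aplus : R := (1 + 1 / Num.sqrt 2) / 4.
Definition aminus : R := (1 - 1 / Num.sqrt 2) / 4.

Definition idx3 (b1 b2 b3 : bool) : nat := 4 * b1 + 2 * b2 + b3.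

(* rows (i1 i2 i3), columns (o1 o2 o3), lexicographic; before the factor 1/2 *)
Definition PG_rows : seq (seq R) :=
  let ap := aplus in let am := aminus in
  [:: [:: 2*ap; 2*am; 0; 0; 0; 0; 2*am; 2*ap];
      [:: 2*ap; 2*am; 0; 0; 0; 0; 2*am; 2*ap];
      [:: ap; am; ap; am; am; ap; am; ap];
      [:: ap; am; ap; am; am; ap; am; ap];
      [:: ap; am; am; ap; ap; am; am; ap];
      [:: ap; am; am; ap; ap; am; am; ap];
      [:: ap; am; am; ap; am; ap; ap; am];
      [:: am; ap; ap; am; ap; am; am; ap] ].

Definition PG : corr := fun o1 o2 o3 i1 i2 i3 =>
  (1 / 2) * nth 0 (nth [::] PG_rows (idx3 i1 i2 i3)) (idx3 o1 o2 o3).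

Definition PGtilde : corr := fun o1 o2 o3 i1 i2 i3 => PG o1 o3 o2 i1 i3 i2.

End Defs.

(* Main.v *)
Require Import Defs.
From HB Require Import structures.
From mathcomp Require Import all_boot all_order all_algebra.
From mathcomp Require Import all_classical all_reals all_analysis.
From mathcomp Require Import measurable_realfun.
From mathcomp Require Import ring lra.
Set Implicit Arguments. Unset Strict Implicit. Unset Printing Implicit Defensive.
Import Order.TTheory GRing.Theory Num.Theory.
Local Open Scope ring_scope.

Section Proofs.
Variable R : realType.

Let s := Num.sqrt (2 : R).
Lemma s_ge0 : 0 <= s. Proof. exact: sqrtr_ge0. Qed.
Lemma s_sq : s * s = 2.
Proof. by rewrite -expr2 sqr_sqrtr // ler0n. Qed.
Lemma s_gt1 : 1 < s.
Proof. have := s_ge0; have := s_sq; nra. Qed.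
Lemma inv_s : 1 / s = s / 2.
Proof.
have h := s_gt1; have hs := s_sq.
have hs0 : s != 0 by apply/eqP => e; rewrite e in h; lra.
apply: (mulIf hs0); rewrite mul1r mulVf //; lra.
Qed.
Lemma ap_val : aplus R = (1 + s / 2) / 4. Proof. by rewrite /aplus inv_s. Qed.
Lemma am_val : aminus R = (1 - s / 2) / 4. Proof. by rewrite /aminus inv_s. Qed.
Lemma s_lt2 : s < 2. Proof. have := s_ge0; have := s_sq; nra. Qed.
Lemma ap_ge0 : 0 <= aplus R. Proof. rewrite ap_val; have := s_ge0; lra. Qed.
Lemma am_ge0 : 0 <= aminus R. Proof. rewrite am_val; have := s_lt2; lra. Qed.
Lemma apam : aplus R + aminus R = 1 / 2.
Proof. rewrite ap_val am_val; lra. Qed.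

Definition dk (k : nat) : {measure set nat -> \bar R} := \d_k.
Definition mu4' := msum dk 4.
Definition q4 : {nonneg R} := (1/4)%:nng.
Notation mu4 := (mscale q4 mu4').
Lemma mu4_setT : mu4 setT = 1%E.
Proof.
rewrite /mscale /= /mu4' /msum !big_ord_recr big_ord0 /= /dk !diracT.
rewrite add0e -!EFinD -EFinM; congr EFin; lra.
Qed.
HB.instance Definition _ := Measure_isProbability.Build _ _ R mu4 mu4_setT.

Lemma mfun_nat d (U : measurableType d) (f : nat -> U) :
  measurable_fun [set: nat] f.
Proof. by move=> _ B _. Qed.

Lemma int_mu4 (f : nat -> \bar R) : (forall x, 0 <= f x)%E ->
  (\int[mu4]_x f x = (1/4)%:E * (f 0%N + f 1%N + f 2%N + f 3%N))%E.
Proof.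
move=> f0.
rewrite ge0_integral_mscale //; try exact: mfun_nat.
rewrite ge0_integral_measure_sum //; try exact: mfun_nat.
rewrite !big_ord_recr big_ord0 /= /dk !integral_dirac //; try exact: mfun_nat.
by rewrite !diracT !mul1e add0e.
Qed.

Definition x0 (k : nat) : bool := odd k.
Definition x1 (k : nat) : bool := odd k./2.
Definition Ad (k : nat) (o1 i1 : bool) : R :=
  if o1 == (if i1 then x1 k else x0 k) then 1 else 0.
Definition rr (k : nat) (o3 : bool) : R :=
  if o3 == x0 k then 2 * aplus R else 2 * aminus R.
Definition Qd (k : nat) (o2 o3 i2 i3 : bool) : R :=
  rr k o3 * (if o2 == (if i2 then x0 k (+) x1 k (+) i3 else x0 k) then 1 else 0).

Lemma Ad_ge0 k o i : 0 <= Ad k o i.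
Proof. by rewrite /Ad; case: ifP. Qed.
Lemma rr_ge0 k o : 0 <= rr k o.
Proof. rewrite /rr; have := ap_ge0; have := am_ge0; case: ifP => _; lra. Qed.
Lemma Qd_ge0 k o2 o3 i2 i3 : 0 <= Qd k o2 o3 i2 i3.
Proof. by rewrite /Qd; apply: mulr_ge0; [exact: rr_ge0 | case: ifP]. Qed.

Lemma PG_in : ATOBL_2from3 (@PG R).
Proof.
exists _, nat, mu4, Ad, Qd.
split; [|split; [|split; [|split]]].
- move=> l; split; first exact: Ad_ge0.
  by move=> i; rewrite /Ad; case: (if i then _ else _); rewrite /=; lra.
- move=> l; split; first split.
  + exact: Qd_ge0.
  + move=> i2 i3; rewrite /Qd /rr; have := apam.
    case: (if i2 then _ else _); case: (x0 l); rewrite /=; lra.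
  + move=> o3 i2 i2' i3; rewrite /Qd.
    by case: (if i2 then _ else _); case: (if i2' then _ else _);
      rewrite /= !mulr1 !mulr0 ?addr0 ?add0r.
- by move=> o1 i1; exact: mfun_nat.
- by move=> o2 o3 i2 i3; exact: mfun_nat.
- move=> o1 o2 o3 i1 i2 i3; rewrite int_mu4; last first.
    by move=> x; rewrite lee_fin; apply: mulr_ge0; [exact: Ad_ge0|exact: Qd_ge0].
  rewrite -!EFinD -EFinM; congr EFin.
  rewrite /PG /Ad /Qd /rr /x0 /x1 /=.
  by case: o1; case: o2; case: o3; case: i1; case: i2; case: i3;
    rewrite /=; lra.
Qed.

Definition Slist : seq (bool * bool * bool * bool * bool) :=
  [:: (false, false, false, false, false); (false, true, false, false, false);
      (true, false, true, false, false); (true, true, true, false, false);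
      (false, false, false, false, true); (false, true, false, false, true);
      (true, false, true, false, true); (true, true, true, false, true);
      (false, false, false, true, false); (false, true, true, true, false);
      (true, false, true, true, false); (true, true, false, true, false);
      (false, false, true, true, true); (false, true, false, true, true);
      (true, false, false, true, true); (true, true, true, true, true)].

Definition Sfun (f : bool -> bool -> bool -> bool -> bool -> bool -> R) : R :=
  \sum_(t <- Slist) f t.1.1.1.1 t.1.1.1.2 t.1.1.2 t.1.2 true t.2.

Lemma key (a : bool -> bool -> R) (q : bool -> bool -> bool -> bool -> R) :
  cond1 a -> cond2 q -> type_2to3 q ->
  Sfun (fun o1 o2 o3 i1 i2 i3 => a o1 i1 * q o2 o3 i2 i3) <= 3.
Proof.
move=> [a0 a1] [q0 q1] ns.
rewrite /Sfun /Slist !big_cons big_nil /=.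
have ea0 : a true false = 1 - a false false by have := a1 false; lra.
have ea1 : a true true = 1 - a false true by have := a1 true; lra.
rewrite ea0 ea1.
have u0 := a0 false false; have u1 := a0 false true.
have v0 := a0 true false; have v1 := a0 true true.
rewrite ea0 in v0; rewrite ea1 in v1.
move: u0 u1 v0 v1.
have := q1 true false; have := q1 true true.
have := ns false true false true; have := ns true true false true.
have := q0 false false true false; have := q0 false true true false.
have := q0 true false true false; have := q0 true true true false.
have := q0 false false true true; have := q0 false true true true.
have := q0 true false true true; have := q0 true true true true.
set A0 := a false false; set A1 := a false true.
set q00 := q false false true false; set q01 := q false true true false.
set q10 := q true false true false; set q11 := q true true true false.
set r00 := q false false true true; set r01 := q false true true true.
set r10 := q true false true true; set r11 := q true true true true.
move=> h1 h2 h3 h4 h5 h6 h7 h8 h9 h10 h11 h12 u0 u1 v0 v1.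
pose X := q00 + q10 - q01 - q11 + r00 + r10 - r01 - r11.
pose Y := q00 + q11 - q01 - q10 + r01 + r10 - r00 - r11.
have [hX|hX] := lerP 0 X; have [hY|hY] := lerP 0 Y.
- have p1 : 0 <= (1 - A0) * X by apply: mulr_ge0; lra.
  have p2 : 0 <= (1 - A1) * Y by apply: mulr_ge0; lra.
  rewrite /X in p1; rewrite /Y in p2; lra.
- have p1 : 0 <= (1 - A0) * X by apply: mulr_ge0; lra.
  have p2 : 0 <= A1 * (- Y) by apply: mulr_ge0; lra.
  rewrite /X in p1; rewrite /Y in p2; lra.
- have p1 : 0 <= A0 * (- X) by apply: mulr_ge0; lra.
  have p2 : 0 <= (1 - A1) * Y by apply: mulr_ge0; lra.
  rewrite /X in p1; rewrite /Y in p2; lra.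
- have p1 : 0 <= A0 * (- X) by apply: mulr_ge0; lra.
  have p2 : 0 <= A1 * (- Y) by apply: mulr_ge0; lra.
  rewrite /X in p1; rewrite /Y in p2; lra.
Qed.

Lemma SPG : 3 < Sfun (@PG R).
Proof.
rewrite /Sfun /Slist !big_cons big_nil /PG /=.
rewrite ap_val; have := s_gt1; lra.
Qed.

Lemma PG_out : ~ ATOBL_2to3 (@PG R).
Proof.
move=> [d [T [P [A [Q [hA [hQ [mA [mQ hp]]]]]]]]].
have := SPG; apply/negP; rewrite -leNgt -lee_fin.
rewrite /Sfun -sumEFin.
under eq_bigr => t _ do rewrite hp.
have mf : forall o1 o2 o3 i1 i2 i3,
    measurable_fun setT (fun l => (A l o1 i1 * Q l o2 o3 i2 i3)%:E).
  move=> o1 o2 o3 i1 i2 i3; apply/measurable_EFinP.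
  exact: measurable_funM.
have f0 : forall o1 o2 o3 i1 i2 i3 l, (0 <= (A l o1 i1 * Q l o2 o3 i2 i3)%:E)%E.
  move=> o1 o2 o3 i1 i2 i3 l; rewrite lee_fin; apply: mulr_ge0.
  - by case: (hA l) => + _; apply.
  - by case: (hQ l) => -[+ _] _; apply.
rewrite -ge0_integral_sum //; try (by move=> t; exact: mf);
  try (by move=> t x _; exact: f0).
apply: (@le_trans _ _ (\int[P]_(x in setT) (cst 3%:E) x)%E).
  apply: ge0_le_integral => //.
  - by move=> x _; apply: sume_ge0 => t _; exact: f0.
  - by apply: emeasurable_sum => t _; exact: mf.
  - move=> l _; rewrite sumEFin lee_fin.
    case: (hQ l) => c2 ty; have := key (hA l) c2 ty.
    by rewrite /Sfun.
rewrite integral_cst //.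
rewrite [X in (_ * X <= _)%E](_ : _ = 1%E); first by rewrite mule1.
exact: probability_setT.
Qed.

Definition swp (p : corr R) : corr R :=
  fun o1 o2 o3 i1 i2 i3 => p o1 o3 o2 i1 i3 i2.

Lemma swap_fwd p : ATOBL_2from3 p -> ATOBL_2to3 (swp p).
Proof.
move=> [d [T [P [A [Q [hA [hQ [mA [mQ hp]]]]]]]]].
exists d, T, P, A, (fun l o2 o3 i2 i3 => Q l o3 o2 i3 i2).
split; [exact: hA|split; [|split; [exact: mA|split]]].
- move=> l; case: (hQ l) => -[q0 q1] ty; split; first split.
  + by move=> *; exact: q0.
  + by move=> i2 i3; have := q1 i3 i2; lra.
  + by move=> o2 i2 i3 i3'; exact: ty.
- by move=> o2 o3 i2 i3; exact: mQ.
- by move=> o1 o2 o3 i1 i2 i3; exact: hp.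
Qed.

Lemma swap_bwd p : ATOBL_2to3 p -> ATOBL_2from3 (swp p).
Proof.
move=> [d [T [P [A [Q [hA [hQ [mA [mQ hp]]]]]]]]].
exists d, T, P, A, (fun l o2 o3 i2 i3 => Q l o3 o2 i3 i2).
split; [exact: hA|split; [|split; [exact: mA|split]]].
- move=> l; case: (hQ l) => -[q0 q1] ty; split; first split.
  + by move=> *; exact: q0.
  + by move=> i2 i3; have := q1 i3 i2; lra.
  + by move=> o3 i2 i2' i3; exact: ty.
- by move=> o2 o3 i2 i3; exact: mQ.
- by move=> o1 o2 o3 i1 i2 i3; exact: hp.
Qed.

End Proofs.

Theorem mainTheorem2 (R : realType) :
  (* TOBL is a proper subset of ATOBL_{2<-3} *)
  ((forall p : corr R, TOBL p -> ATOBL_2from3 p) /\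
   (exists p : corr R, ATOBL_2from3 p /\ ~ TOBL p)) /\
  (* TOBL is a proper subset of ATOBL_{2->3} *)
  ((forall p : corr R, TOBL p -> ATOBL_2to3 p) /\
   (exists p : corr R, ATOBL_2to3 p /\ ~ TOBL p)) /\
  (* more specifically *)
  (ATOBL_2from3 (@PG R) /\ ~ ATOBL_2to3 (@PG R)) /\
  (ATOBL_2to3 (@PGtilde R) /\ ~ ATOBL_2from3 (@PGtilde R)).
Proof.
have tin : ATOBL_2to3 (@PGtilde R) by exact: (swap_fwd (@PG_in R)).
have tout : ~ ATOBL_2from3 (@PGtilde R).
  by move=> H; apply: (@PG_out R); exact: (swap_fwd H).
split; [split|split; [split|split]].
- by move=> p [].
- by exists (@PG R); split; [exact: PG_in | case=> _; exact: PG_out].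
- by move=> p [].
- by exists (@PGtilde R); split; [exact: tin | case=> h _; exact: tout h].
- by split; [exact: PG_in | exact: PG_out].
- by split.
Qed.
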